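(* For all $s>0$ and $K\in\mathbb{N}$, the function $f^{s,K}_{square}(t):=\frac{2s}{K}\sum_{k=1}^K\big([t-\tfrac{sk}{K}]_++[-t-\tfrac{sk}{K}]_+\big)$ satisfies $$\sup_{t\in[-s,s]}|f^{s,K}_{square}(t)-t^2|\le s^2\Big(\frac1K+\frac1{K^2}\Big).$$
   Context: $[t]_+=\max(t,0)$. *)

(* Defs.v *)
From mathcomp Require Import all_boot all_order all_algebra.
Set Implicit Arguments. Unset Strict Implicit. Unset Printing Implicit Defensive.
Import Order.TTheory GRing.Theory Num.Theory.
Local Open Scope ring_scope.

Definition pos_part (R : realDomainType) (t : R) : R := Num.max t 0.

Definition f_square (R : realFieldType) (s : R) (K : nat) (t : R) : R :=
  (2 * s / K%:R) * \sum_(1 <= k < K.+1)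
      (pos_part (t - s * k%:R / K%:R) + pos_part (- t - s * k%:R / K%:R)).

(* Main.v *)
Require Import Defs.
From mathcomp Require Import all_boot all_order all_algebra.
From mathcomp Require Import ring lra.
Import Order.TTheory GRing.Theory Num.Theory.
Local Open Scope ring_scope.

Lemma G_eq (R : realFieldType) (h t : R) (n j : nat) : 0 < h -> (j <= n)%N ->
  j%:R * h <= t -> ((j < n)%N -> t <= j%:R * h + h) ->
  2 * \sum_(1 <= k < n.+1) pos_part (t - h * k%:R) = 2 * j%:R * t - h * j%:R * (j%:R + 1).
Proof.
move=> h0; elim: n j => [|n IH] j hj t1 t2.
  move: hj; rewrite leqn0 => /eqP ->; rewrite big_geq //; lra.
rewrite big_nat_recr //= mulrDr.
have [jn|nj] := leqP j n.
  have t2' := t2 jn.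
  rewrite (IH j jn t1); last by move=> _.
  have jnh : j%:R * h <= n%:R * h by rewrite ler_wpM2r ?ler_nat // ltW.
  rewrite /pos_part max_r; first lra.
  rewrite -natr1 mulrDr mulr1 (mulrC h); lra.
have ej : j = n.+1 by apply/eqP; rewrite eqn_leq hj nj.
subst j.
rewrite -natr1 mulrDl mul1r in t1.
rewrite (IH n (leqnn n)); last (by rewrite ltnn); last lra.
rewrite /pos_part max_l; first by rewrite -natr1; ring.
rewrite -natr1 mulrDr mulr1 (mulrC h); lra.
Qed.

Lemma exists_j (R : realFieldType) (h t : R) (n : nat) : 0 < h -> 0 <= t <= n%:R * h ->
  exists j : nat, (j <= n)%N /\ j%:R * h <= t <= j%:R * h + h.
Proof.
move=> h0; elim: n => [|n IH] /andP[t1 t2].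
  exists 0%N; split => //; apply/andP; split; lra.
move: t2; rewrite -natr1 => t2.
have [tn|tn] := lerP t (n%:R * h).
  have [j [jn hj]] := IH (introT andP (conj t1 tn)).
  by exists j; split => //; exact: leq_trans jn (leqnSn n).
exists n; split; first exact: leqnSn.
apply/andP; split; lra.
Qed.

Lemma f_even (R : realFieldType) (s : R) (K : nat) (t : R) :
  f_square s K (- t) = f_square s K t.
Proof.
rewrite /f_square; congr (_ * _); apply: eq_bigr => k _.
by rewrite opprK addrC.
Qed.

Lemma main_pos (R : realFieldType) (s : R) (K : nat) :
  0 < s -> (1 <= K)%N ->
  forall t : R, 0 <= t <= s ->
    `|f_square s K t - t ^+ 2| <= s ^+ 2 * (K%:R^-1 + (K%:R ^+ 2)^-1).
Proof.
move=> s0 K1 t /andP[t1 t2].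
have K0 : 0 < K%:R :> R by rewrite ltr0n.
set h := s / K%:R.
have h0 : 0 < h by rewrite /h divr_gt0.
have sh : s = K%:R * h by rewrite /h mulrC divfK // gt_eqF.
have [j [jK hj]] : exists j : nat, (j <= K)%N /\ j%:R * h <= t <= j%:R * h + h.
  by apply: exists_j => //; rewrite -sh; apply/andP.
have jKR : j%:R <= K%:R :> R by rewrite ler_nat.
have E : f_square s K t = h * (2 * j%:R * t - h * j%:R * (j%:R + 1)).
  move: hj => /andP[hj1 hj2].
  rewrite -(@G_eq _ h t K j h0 jK hj1 (fun _ => hj2)) /f_square.
  have -> : 2 * s / K%:R = h * 2 by rewrite /h; field; rewrite gt_eqF.
  rewrite -mulrA; congr (_ * (_ * _)).
  apply: eq_bigr => k _.
  have -> : pos_part (- t - s * k%:R / K%:R) = 0.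
    rewrite /pos_part max_r // -mulrA.
    have : 0 <= s * (k%:R / K%:R) by rewrite mulr_ge0 // ?divr_ge0 // ltW.
    lra.
  by rewrite addr0 /h mulrAC.
rewrite E.
have Erhs : s ^+ 2 * (K%:R^-1 + (K%:R ^+ 2)^-1) = h ^+ 2 * K%:R + h ^+ 2.
  by rewrite sh; field; rewrite gt_eqF.
rewrite Erhs.
move: hj => /andP[u1 u2].
have D : h * (2 * j%:R * t - h * j%:R * (j%:R + 1)) - t ^+ 2
   = - ((t - h * j%:R) ^+ 2 + h ^+ 2 * j%:R) by ring.
rewrite D normrN ger0_norm; last first.
  by rewrite addr_ge0 ?sqr_ge0 // mulr_ge0 ?sqr_ge0 ?ler0n.
have A : (t - h * j%:R) ^+ 2 <= h ^+ 2.
  have v0 : 0 <= t - h * j%:R by lra.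
  have v1 : t - h * j%:R <= h by lra.
  nra.
have B : h ^+ 2 * j%:R <= h ^+ 2 * K%:R.
  by rewrite ler_wpM2l // sqr_ge0.
lra.
Qed.

Theorem lemma12 (R : realFieldType) (s : R) (K : nat) :
  0 < s -> (1 <= K)%N ->
  forall t : R, - s <= t <= s ->
    `|f_square s K t - t ^+ 2| <= s ^+ 2 * (K%:R^-1 + (K%:R ^+ 2)^-1).
Proof.
move=> s0 K1 t /andP[t1 t2].
have [t0|t0] := lerP 0 t.
  by apply: main_pos => //; apply/andP.
rewrite -f_even -sqrrN; apply: main_pos => //; apply/andP; split; lra.
Qed.
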